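(* Let $R$ be a commutative ring with identity, let $(S,\leq)$ be a strictly ordered monoid, and suppose $S=S_1\sqcup S_2$ is a disjoint union of subsets. Define the $R$-linear map $P:R\,S\to R\,S$ on the monoid algebra by $P(x)=x$ for $x\in S_1$ and $P(x)=0$ for $x\in S_2$, and define $\widehat{P}:[[R^{S,\leq}]]\to[[R^{S,\leq}]]$ by $\widehat{P}(f)(s)=f(s)$ for $s\in S_1$ and $\widehat{P}(f)(s)=0$ for $s\in S_2$. Then $P$ is a Rota-Baxter operator (of weight $-1$) on $R\,S$ if and only if $\widehat{P}$ is a Rota-Baxter operator (of weight $-1$) on $[[R^{S,\leq}]]$.
   Context: All monoids are commutative and written additively with neutral element $0$. A partially ordered set is artinian if every strictly decreasing sequence is finite, and narrow if every subset of pairwise incomparable elements is finite. A strictly ordered monoid is a commutative monoid $S$ with a partial order $\leq$ such that $s<s'$ implies $s+t<s'+t$ for all $s,s',t\in S$. The ring of generalized power series $[[R^{S,\leq}]]$ is the set of maps $f:S\to R$ with artinian and narrow support $\{s: f(s)\neq 0\}$, with pointwise addition and convolution $(fg)(s)=\sum f(u)g(v)$ over the finitely many pairs $(u,v)$ with $u+v=s$, $f(u)\neq0$, $g(v)\neq0$. A Rota-Baxter operator of weight $-1$ on an associative $R$-algebra $A$ is an $R$-linear $P:A\to A$ with $P(x)P(y)=P(xP(y))+P(P(x)y)-P(xy)$ for all $x,y\in A$. *)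

(* Defs.v *)
From HB Require Import structures.
From mathcomp Require Import all_boot all_order all_algebra.
From mathcomp Require Import boolp classical_sets cardinality fsbigop.
Set Implicit Arguments. Unset Strict Implicit. Unset Printing Implicit Defensive.
Import GRing.Theory.
Local Open Scope classical_set_scope.
Local Open Scope ring_scope.

(* The commutative monoid S is an nmodType (written additively, neutral 0);
   its partial order is an explicit relation [le]. *)

Definition strictly_ordered_monoid (S : nmodType) (le : S -> S -> Prop) :=
  [/\ (forall x, le x x),
      (forall x y, le x y -> le y x -> x = y),
      (forall x y z, le x y -> le y z -> le x z) &
      (forall s s' t, le s s' /\ s <> s' -> le (s + t) (s' + t) /\ s + t <> s' + t)].

Definition fsupport (S : Type) (R : nmodType) (f : S -> R) : set S :=
  [set s | f s != 0].

Definition artinian (S : Type) (le : S -> S -> Prop) (A : set S) :=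
  ~ exists a : nat -> S, forall n, A (a n) /\ le (a n.+1) (a n) /\ a n.+1 <> a n.

Definition narrow (S : Type) (le : S -> S -> Prop) (A : set S) :=
  forall B : set S, B `<=` A ->
    (forall x y, B x -> B y -> x <> y -> ~ le x y /\ ~ le y x) -> finite_set B.

(* carrier of the monoid algebra R S: finitely supported functions *)
Definition monoid_alg (S : Type) (R : nmodType) (f : S -> R) :=
  finite_set (fsupport f).

(* carrier of the generalized power series ring [[R^{S,<=}]] *)
Definition gps (S : Type) (R : nmodType) (le : S -> S -> Prop) (f : S -> R) :=
  artinian le (fsupport f) /\ narrow le (fsupport f).

(* convolution product: (fg)(s) = sum of f(u) g(v) over u+v=s, f(u)<>0, g(v)<>0
   (this index set is finite on both carriers above) *)
Definition conv (S : nmodType) (R : comPzRingType) (f g : S -> R) : S -> R :=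
  fun s => \sum_(p \in [set p : S * S | p.1 + p.2 = s /\ f p.1 != 0 /\ g p.2 != 0])
             (f p.1 * g p.2).

(* Rota-Baxter operator of weight -1 on the R-algebra whose carrier is the
   set of functions satisfying A, with multiplication mul *)
Definition rota_baxter_op (S : Type) (R : comPzRingType) (A : (S -> R) -> Prop)
    (mul : (S -> R) -> (S -> R) -> S -> R) (P : (S -> R) -> S -> R) :=
  [/\ (forall x, A x -> A (P x)),
      (forall (a : R) x y, A x -> A y ->
          P (fun s => a * x s + y s) = (fun s => a * P x s + P y s)) &
      (forall x y, A x -> A y ->
          mul (P x) (P y) =
          (fun s => P (mul x (P y)) s + P (mul (P x) y) s - P (mul x y) s))].

Definition proj12 (S : Type) (R : nmodType) (S1 S2 : set S) (f : S -> R) : S -> R :=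
  fun s => if `[< S1 s >] then f s else 0.

(* Main.v *)
Require Import Defs.
From HB Require Import structures.
From mathcomp Require Import all_boot all_order all_algebra.
From mathcomp Require Import boolp classical_sets cardinality fsbigop functions.
From Stdlib Require Import Classical.
Set Implicit Arguments. Unset Strict Implicit. Unset Printing Implicit Defensive.
Local Open Scope classical_set_scope.

Lemma dc {T : Type} (Q : T -> Prop) (Rl : T -> T -> Prop) x0 :
  Q x0 -> (forall x, Q x -> exists y, Q y /\ Rl x y) ->
  exists f : nat -> T, f 0%N = x0 /\ forall n, Q (f n) /\ Rl (f n) (f n.+1).
Proof.
move=> Q0 step.
have g : forall x : {x | Q x}, {y : {x | Q x} | Rl (sval x) (sval y)}.
  move=> [x Qx]; have /cid [y [Qy Rxy]] := step x Qx; by exists (exist _ y Qy).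
pose h n := iter n (fun x => sval (g x)) (exist _ x0 Q0).
exists (fun n => sval (h n)); split=> // n; split; first exact: svalP (h n).
exact: svalP (g (h n)).
Qed.

Section PWO.
Variables (S : Type) (le : S -> S -> Prop).
Hypothesis le_trans : forall x y z, le x y -> le y z -> le x z.
Hypothesis le_refl : forall x, le x x.

Lemma minimal_below (A Y : set S) y : artinian le A -> Y `<=` A -> Y y ->
  exists m, Y m /\ le m y /\ (forall z, Y z -> le z m -> z = m).
Proof.
move=> art YA Yy; apply: NNPP => H; apply: art.
have step : forall x, (Y x /\ le x y) -> exists x', (Y x' /\ le x' y) /\ (le x' x /\ x' <> x).
  move=> x [Yx xy]; apply: NNPP => H2; apply: H; exists x; split=> //; split=> //.
  move=> z Yz zx; apply: NNPP => zneq; apply: H2; exists z.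
  by split; split=> //; apply: le_trans xy.
have [f [f0 Hf]] := dc (conj Yy (le_refl y)) step.
exists f => n; have [[Yn _] [? ?]] := Hf n; split; first exact: YA.
by split.
Qed.

Lemma good (A : set S) (a : nat -> S) (I : set nat) :
  artinian le A -> narrow le A -> (forall n, A (a n)) -> infinite_set I ->
  exists i, I i /\ infinite_set [set j | I j /\ (i < j)%N /\ le (a i) (a j)].
Proof.
move=> art nar Aa infI; apply: NNPP => H.
have Hfin : forall i, I i -> finite_set [set j | I j /\ (i < j)%N /\ le (a i) (a j)].
  by move=> i Ii; apply: NNPP => nf; apply: H; exists i.
pose Y := a @` I.
have YA : Y `<=` A by move=> _ [n _ <-].
pose M := [set m | Y m /\ forall z, Y z -> le z m -> z = m].
have finM : finite_set M.
  apply: nar; first by move=> m [Ym _]; exact: YA.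
  move=> x y [Yx mx] [Yy my] xy; split => h.
  - by apply: xy; apply: my.
  - by apply: xy; symmetry; apply: mx.
apply: infI.
apply: (sub_finite_set (B := \bigcup_(m in M) [set j | I j /\ le m (a j)])).
  move=> j Ij.
  have [m [Ym [mj mmin]]] := minimal_below (y := a j) art YA (ex_intro2 _ _ j Ij erefl).
  by exists m.
apply: bigcup_finite => // m [[i Ii <-] _].
apply: (sub_finite_set (B := [set j | I j /\ (i < j)%N /\ le (a i) (a j)] `|` `I_i.+1)).
  move=> j [Ij aij]; case: (ltnP i j) => ij; [left | right] => //=.
by rewrite finite_setU; split; [exact: Hfin | exact: finite_II].
Qed.

Lemma good2 (A B : set S) (a b : nat -> S) :
  artinian le A -> narrow le A -> artinian le B -> narrow le B ->
  (forall n, A (a n)) -> (forall n, B (b n)) ->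
  exists i j, (i < j)%N /\ le (a i) (a j) /\ le (b i) (b j).
Proof.
move=> artA narA artB narB Aa Bb; apply: NNPP => H.
pose Q (x : nat * set nat) := infinite_set x.2 /\
  forall j, x.2 j -> (x.1 < j)%N /\ le (a x.1) (a j).
pose Rl (x y : nat * set nat) := x.2 y.1 /\ y.2 `<=` x.2.
have [i0 [_ inf0]] := good artA narA Aa infinite_nat.
have Q0 : Q (i0, [set j | setT j /\ (i0 < j)%N /\ le (a i0) (a j)]).
  by split => // j [_ [? ?]].
have step : forall x, Q x -> exists y, Q y /\ Rl x y.
  move=> [i I] [infI HI]; have [i' [Ii' inf']] := good artA narA Aa infI.
  exists (i', [set j | I j /\ (i' < j)%N /\ le (a i') (a j)]); split.
    by split => // j [_ [? ?]].
  by split => //= j [].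
have [f [_ Hf]] := dc Q0 step.
have chain : forall n k, (n <= k)%N -> (f k).2 `<=` (f n).2.
  move=> n k; elim: k => [|k IH]; first by rewrite leqn0 => /eqP ->.
  rewrite leq_eqVlt => /orP [/eqP -> //| ]; rewrite ltnS => nk.
  by move=> j /(proj2 (proj2 (Hf k))) /(IH nk).
have incl : forall n m, (n < m)%N -> (f n).2 (f m).1.
  move=> n [//|m] nm; apply: (chain n m); first by rewrite -ltnS.
  exact: (proj1 (proj2 (Hf m))).
have [k [_ infk]] := good artB narB (fun n => Bb (f n).1) infinite_nat.
have [l /= [_ [kl bkl]]] := infinite_setN0 infk.
have := incl k l kl; move=> /(proj2 (proj1 (Hf k))) [ikl akl].
by apply: H; exists (f k).1, (f l).1.
Qed.
End PWO.

Lemma inf_seq (T : choiceType) (X : set T) : infinite_set X ->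
  exists h : nat -> T, (forall n, X (h n)) /\ injective h.
Proof.
move=> /infiniteP/card_leP[e].
exists (fun n => val (e (exist _ n (in_setT n)))); split.
  move=> n; exact: set_valP.
move=> n m /val_inj /(@inj _ _ _ e) H.
by move: (H (in_setT _) (in_setT _)) => [].
Qed.

Import GRing.Theory.
Local Open Scope ring_scope.

Lemma pairs_finite (S : nmodType) (R : nmodType) le (f g : S -> R) w :
  strictly_ordered_monoid le -> gps le f -> gps le g ->
  finite_set [set p : S * S | p.1 + p.2 = w /\ f p.1 != 0 /\ g p.2 != 0].
Proof.
move=> [lrefl lanti ltrans lmono] [artf narf] [artg narg].
apply: NNPP => /inf_seq [h [Xh hinj]].
have [i [j [ij [aij bij]]]] := good2 ltrans lrefl artf narf artg narg
  (a := fun n => (h n).1) (b := fun n => (h n).2)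
  (fun n => proj1 (proj2 (Xh n))) (fun n => proj2 (proj2 (Xh n))).
have hne : h i <> h j by move=> /hinj /eqP; rewrite ltn_eqF.
move: (Xh i) (Xh j) hne aij bij; case: (h i) => u v; case: (h j) => u' v' /=.
move=> [e1 _] [e2 _] hne uu vv.
have [equ|neu] := eqVneq u u'.
  subst u'; have nev : v <> v' by move=> ev; apply: hne; rewrite ev.
  have [_ ] := lmono v v' u (conj vv nev).
  by rewrite addrC e1 addrC e2.
have [l1 n1] := lmono u u' v (conj uu (fun e => (negP neu) (introT eqP e))).
have l2 : le (u' + v) (u' + v').
  have [->|nev] := eqVneq v v'; first exact: lrefl.
  have [+ _] := lmono v v' u' (conj vv (fun e => (negP nev) (introT eqP e))).
  by rewrite addrC [v' + _]addrC.
apply: n1; rewrite e1; apply: lanti; first by rewrite -e1.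
by rewrite -e2.
Qed.

Lemma finite_gps (S : nmodType) (R : nmodType) le (f : S -> R) :
  strictly_ordered_monoid le -> monoid_alg f -> gps le f.
Proof.
move=> [lrefl lanti ltrans _] fin; split; last first.
  by move=> B BA _; exact: sub_finite_set BA fin.
move: fin => /finite_fsetP [B eB] [a Ha].
have le_mn : forall n k, le (a (n + k)%N) (a n).
  move=> n; elim=> [|k IH]; first by rewrite addn0.
  by apply: ltrans IH; rewrite addnS; have [_ [? _]] := Ha (n + k)%N.
have ne : forall n m, (n < m)%N -> a m <> a n.
  move=> n m nm amn; have [_ [l1 n1]] := Ha n; apply: n1.
  apply: lanti => //; rewrite -amn -(subnKC nm); exact: le_mn.
have ainj : injective a.
  move=> n m e; case: (ltngtP n m) => // h; [exact: False_ind (ne _ _ h (esym e))|].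
  exact: False_ind (ne _ _ h e).
have: uniq (map a (iota 0 (size (finmap.enum_fset B)).+1)) by rewrite map_inj_uniq // iota_uniq.
move=> /uniq_leq_size /(_ _) H.
have: (size (map a (iota 0 (size (finmap.enum_fset B)).+1)) <= size (finmap.enum_fset B))%N.
  apply: H => _ /mapP [n _ ->]; have [An _] := Ha n; move: An; rewrite eB //=.
by rewrite size_map size_iota ltnn.
Qed.

Lemma conv_loc (S : nmodType) (R : comPzRingType) (F G F' G' : S -> R) w :
  (forall u, F' u != 0 -> F' u = F u) -> (forall v, G' v != 0 -> G' v = G v) ->
  (forall u v, u + v = w -> F u != 0 -> G v != 0 -> F' u = F u /\ G' v = G v) ->
  conv F' G' w = conv F G w.
Proof.
move=> h1 h2 h3; rewrite /conv.
have Pe : [set p : S * S | p.1 + p.2 = w /\ F' p.1 != 0 /\ G' p.2 != 0] =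
          [set p | p.1 + p.2 = w /\ F p.1 != 0 /\ G p.2 != 0].
  apply/seteqP; split => -[u v] /= [e [a b]].
  - by rewrite -(h1 _ a) -(h2 _ b).
  - by have [-> ->] := h3 _ _ e a b.
rewrite (eq_fsbigl _ _ _ Pe); apply: eq_fsbigr => -[u v]; rewrite inE => -[e [a b]].
by have [-> ->] := h3 _ _ e a b.
Qed.

Lemma projw (S : Type) (R : nmodType) (S1 S2 : set S) (h : S -> R) w :
  proj12 S1 S2 h w = if `[< S1 w >] then h w else 0.
Proof. by []. Qed.

Lemma proj_nz (S : Type) (R : nmodType) (S1 S2 : set S) (h : S -> R) u :
  proj12 S1 S2 h u != 0 -> h u != 0.
Proof. by rewrite /proj12; case: ifP => //; rewrite eqxx. Qed.

Lemma proj_sub (S : Type) (R : nmodType) (S1 S2 : set S) (h : S -> R) :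
  fsupport (proj12 S1 S2 h) `<=` fsupport h.
Proof. by move=> u; apply: proj_nz. Qed.

Lemma proj_lin (S : Type) (R : comPzRingType) (S1 S2 : set S) (a : R) (x y : S -> R) :
  proj12 S1 S2 (fun s => a * x s + y s) =
  (fun s => a * proj12 S1 S2 x s + proj12 S1 S2 y s).
Proof. by apply/funext => s; rewrite /proj12; case: ifP; rewrite ?mulr0 ?addr0. Qed.

Theorem corollary2p3 (R : comPzRingType) (S : nmodType) (le : S -> S -> Prop)
    (S1 S2 : set S) :
  strictly_ordered_monoid le ->
  S1 `&` S2 = set0 -> S1 `|` S2 = setT ->
  (rota_baxter_op (@monoid_alg S R) (@conv S R) (proj12 S1 S2) <->
   rota_baxter_op (@gps S R le) (@conv S R) (proj12 S1 S2)).
Proof.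
move=> som _ _.
have [lrefl lanti ltrans lmono] := som.
split => -[c1 c2 c3]; split.
- move=> x [art nar]; split.
    move=> [a Ha]; apply: art; exists a => n; have [h1 h2] := Ha n.
    by split => //; exact: (proj_sub h1).
  by move=> B BA; apply: nar => t /BA; exact: proj_sub.
- by move=> a x y _ _; exact: proj_lin.
- move=> x y gx gy; apply/funext => w /=.
  have finX := pairs_finite w som gx gy.
  pose cx u := `[< exists v, u + v = w /\ y v != 0 >].
  pose cy v := `[< exists u, u + v = w /\ x u != 0 >].
  pose x' u := if cx u then x u else 0.
  pose y' v := if cy v then y v else 0.
  have mx' : monoid_alg x'.
    apply: sub_finite_set (finite_image fst finX) => u; rewrite /fsupport /= /x'.
    case: ifP => [/asboolP [v [e nz]] nzx | _]; last by rewrite eqxx.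
    by exists (u, v).
  have my' : monoid_alg y'.
    apply: sub_finite_set (finite_image snd finX) => v; rewrite /fsupport /= /y'.
    case: ifP => [/asboolP [u [e nz]] nzy | _]; last by rewrite eqxx.
    by exists (u, v).
  have H := congr1 (fun h => h w) (c3 x' y' mx' my'); move: H; rewrite /= !projw.
  have loc1 : forall u, proj12 S1 S2 x' u != 0 -> proj12 S1 S2 x' u = proj12 S1 S2 x u.
    by move=> u; rewrite /proj12 /x'; repeat case: ifP => _ //; rewrite eqxx.
  have loc2 : forall u, x' u != 0 -> x' u = x u.
    by move=> u; rewrite /x'; repeat case: ifP => _ //; rewrite eqxx.
  have loc3 : forall u, proj12 S1 S2 y' u != 0 -> proj12 S1 S2 y' u = proj12 S1 S2 y u.
    by move=> u; rewrite /proj12 /y'; repeat case: ifP => _ //; rewrite eqxx.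
  have loc4 : forall u, y' u != 0 -> y' u = y u.
    by move=> u; rewrite /y'; repeat case: ifP => _ //; rewrite eqxx.
  have hc : forall u v, u + v = w -> x u != 0 -> y v != 0 -> cx u /\ cy v.
    by move=> u v e nx ny; split; apply/asboolP; [exists v | exists u].
  have E1 : conv (proj12 S1 S2 x') (proj12 S1 S2 y') w =
            conv (proj12 S1 S2 x) (proj12 S1 S2 y) w.
    apply: conv_loc => // u v e hx hy; have nx := proj_nz hx; have ny := proj_nz hy.
    by have [hu hv] := hc _ _ e nx ny; rewrite /proj12 /x' /y' hu hv.
  have E2 : conv x' (proj12 S1 S2 y') w = conv x (proj12 S1 S2 y) w.
    apply: conv_loc => // u v e nx hy; have ny := proj_nz hy.
    by have [hu hv] := hc _ _ e nx ny; rewrite /proj12 /x' /y' hu hv.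
  have E3 : conv (proj12 S1 S2 x') y' w = conv (proj12 S1 S2 x) y w.
    apply: conv_loc => // u v e hx ny; have nx := proj_nz hx.
    by have [hu hv] := hc _ _ e nx ny; rewrite /proj12 /x' /y' hu hv.
  have E4 : conv x' y' w = conv x y w.
    apply: conv_loc => // u v e nx ny.
    by have [hu hv] := hc _ _ e nx ny; rewrite /x' /y' hu hv.
  by rewrite E1 E2 E3 E4.
- move=> x fx; exact: (sub_finite_set (@proj_sub _ _ S1 S2 x) fx).
- by move=> a x y _ _; exact: proj_lin.
- by move=> x y mx my; apply: c3; apply: finite_gps.
Qed.
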